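(* Let $f,g:[0,+\infty)\to[0,+\infty)$ be increasing functions with $\lim_{x\to+\infty}f(x)=\lim_{x\to+\infty}g(x)=+\infty$. Then there exist $\delta>0$ and a continuous increasing concave function $v:[0,+\infty)\to[0,+\infty)$ with $\lim_{x\to+\infty}v(x)=+\infty$ such that $\frac{v(f(x))}{v(g(x))}\ge\delta$ for every sufficiently large $x$. *)

(* Defs.v *)
From Stdlib Require Import Reals.
Open Scope R_scope.

Definition nonneg_half : R -> Prop := fun x => 0 <= x.

Definition maps_nonneg (f : R -> R) : Prop :=
  forall x, 0 <= x -> 0 <= f x.

(* "increasing" in the weak sense (non-decreasing) on [0,+oo). *)
Definition nondecr_on_nonneg (f : R -> R) : Prop :=
  forall x y, 0 <= x -> x <= y -> f x <= f y.

Definition strict_incr_on_nonneg (f : R -> R) : Prop :=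
  forall x y, 0 <= x -> x < y -> f x < f y.

Definition tends_to_infty (f : R -> R) : Prop :=
  forall M, exists N, forall x, N <= x -> M <= f x.

Definition concave_on_nonneg (v : R -> R) : Prop :=
  forall x y t, 0 <= x -> 0 <= y -> 0 <= t <= 1 ->
    t * v x + (1 - t) * v y <= v (t * x + (1 - t) * y).

(* continuous on [0,+oo) (relative to [0,+oo), i.e. one-sided at 0) *)
Definition continuous_on_nonneg (v : R -> R) : Prop :=
  forall x, 0 <= x -> continue_in v nonneg_half x.

(* Main.v *)
Require Import Defs.
From Stdlib Require Import Reals Lra Lia ZArith.
Open Scope R_scope.

Lemma nat_unb (y : R) : exists n : nat, y < INR n.
Proof.
  destruct (archimed y) as [H1 _].
  exists (Z.abs_nat (up y)).
  rewrite INR_IZR_INZ, Zabs2Nat.id_abs.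
  assert (IZR (up y) <= IZR (Z.abs (up y))) by (apply IZR_le; lia). lra.
Qed.

Definition Lf (a : nat -> R) (k : nat) (y : R) := INR k + (y - a k) * / (a (S k) - a k).
Definition vf (a : nat -> R) (N : R -> nat) (y : R) := Lf a (N y) y.

Lemma a_mono a (hd1 : forall k, 1 <= a (S k) - a k) :
  forall n m, (n <= m)%nat -> a n <= a m.
Proof.
  intros n m H; induction H. lra. specialize (hd1 m); lra.
Qed.

Lemma a_ge a (ha0 : a 0%nat = 0) (hd1 : forall k, 1 <= a (S k) - a k) :
  forall n, INR n <= a n.
Proof.
  induction n. simpl; lra. rewrite S_INR; specialize (hd1 n); lra.
Qed.

Lemma Lf_S a k y (hd1 : forall k, 1 <= a (S k) - a k) :
  Lf a k y = INR (S k) + (y - a (S k)) * / (a (S k) - a k).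
Proof.
  unfold Lf. rewrite S_INR. specialize (hd1 k). field. lra.
Qed.

Lemma inv_mono a (hd1 : forall k, 1 <= a (S k) - a k)
  (hdm : forall k, a (S k) - a k <= a (S (S k)) - a (S k)) k :
  / (a (S (S k)) - a (S k)) <= / (a (S k) - a k).
Proof.
  apply Rinv_le_contravar. specialize (hd1 k); lra. apply hdm.
Qed.

Lemma L_step_up a (hd1 : forall k, 1 <= a (S k) - a k)
  (hdm : forall k, a (S k) - a k <= a (S (S k)) - a (S k)) k y :
  a (S k) <= y -> Lf a (S k) y <= Lf a k y.
Proof.
  intros Hy. rewrite (Lf_S a k y hd1). unfold Lf at 1.
  pose proof (inv_mono a hd1 hdm k).
  apply Rplus_le_compat_l. apply Rmult_le_compat_l; lra.
Qed.

Lemma L_step_down a (hd1 : forall k, 1 <= a (S k) - a k)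
  (hdm : forall k, a (S k) - a k <= a (S (S k)) - a (S k)) k y :
  y <= a (S k) -> Lf a k y <= Lf a (S k) y.
Proof.
  intros Hy. rewrite (Lf_S a k y hd1). unfold Lf.
  pose proof (inv_mono a hd1 hdm k).
  apply Rplus_le_compat_l.
  replace ((y - a (S k)) * / (a (S k) - a k)) with (- ((a (S k) - y) * / (a (S k) - a k))) by ring.
  replace ((y - a (S k)) * / (a (S (S k)) - a (S k))) with (- ((a (S k) - y) * / (a (S (S k)) - a (S k)))) by ring.
  apply Ropp_le_contravar. apply Rmult_le_compat_l; lra.
Qed.


Lemma v_le_L a N (hd1 : forall k, 1 <= a (S k) - a k)
  (hdm : forall k, a (S k) - a k <= a (S (S k)) - a (S k))
  (hN : forall y, 0 <= y -> a (N y) <= y < a (S (N y))) y k :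
  0 <= y -> vf a N y <= Lf a k y.
Proof.
  intros Hy0. destruct (hN y Hy0) as [H1 H2]. unfold vf.
  destruct (le_lt_dec k (N y)) as [Hk|Hk].
  - replace (N y) with (k + (N y - k))%nat in * by lia.
    revert H1. generalize (N y - k)%nat as j. intros j. induction j; intros H1.
    + rewrite Nat.add_0_r; lra.
    + replace (k + S j)%nat with (S (k + j)) in * by lia.
      assert (a (k + j)%nat <= a (S (k + j))) by (apply a_mono; auto).
      eapply Rle_trans. apply L_step_up; auto. apply IHj; lra.
  - replace k with (N y + (k - N y))%nat by lia.
    generalize (k - N y)%nat as j. intros j. induction j.
    + rewrite Nat.add_0_r; lra.
    + replace (N y + S j)%nat with (S (N y + j)) by lia.
      eapply Rle_trans. apply IHj. apply L_step_down; auto.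
      assert (a (S (N y)) <= a (S (N y + j))) by (apply a_mono; auto; lia). lra.
Qed.

Lemma v_bounds a N (hd1 : forall k, 1 <= a (S k) - a k)
  (hN : forall y, 0 <= y -> a (N y) <= y < a (S (N y))) y :
  0 <= y -> INR (N y) <= vf a N y < INR (N y) + 1.
Proof.
  intros Hy. destruct (hN y Hy) as [H1 H2]. unfold vf, Lf.
  specialize (hd1 (N y)).
  assert (0 <= (y - a (N y)) * / (a (S (N y)) - a (N y))).
  { apply Rmult_le_pos. lra. left; apply Rinv_0_lt_compat; lra. }
  assert ((y - a (N y)) * / (a (S (N y)) - a (N y)) < 1).
  { apply (Rmult_lt_reg_r (a (S (N y)) - a (N y))). lra.
    rewrite Rmult_assoc, Rinv_l by lra. lra. }
  lra.
Qed.

Lemma N_ge a N (hd1 : forall k, 1 <= a (S k) - a k)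
  (hN : forall y, 0 <= y -> a (N y) <= y < a (S (N y))) y n :
  0 <= y -> a n <= y -> (n <= N y)%nat.
Proof.
  intros Hy H. destruct (le_lt_dec n (N y)); auto.
  destruct (hN y Hy). assert (a (S (N y)) <= a n) by (apply a_mono; auto). lra.
Qed.

Lemma N_le a N (hd1 : forall k, 1 <= a (S k) - a k)
  (hN : forall y, 0 <= y -> a (N y) <= y < a (S (N y))) y m :
  0 <= y -> y < a (S m) -> (N y <= m)%nat.
Proof.
  intros Hy H. destruct (le_lt_dec (N y) m); auto.
  destruct (hN y Hy). assert (a (S m) <= a (N y)) by (apply a_mono; auto). lra.
Qed.

Lemma v_strict a N (hd1 : forall k, 1 <= a (S k) - a k)
  (hN : forall y, 0 <= y -> a (N y) <= y < a (S (N y))) x y :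
  0 <= x -> x < y -> vf a N x < vf a N y.
Proof.
  intros Hx Hxy.
  assert (Hm : (N x <= N y)%nat).
  { apply (N_ge a N hd1 hN); try lra. destruct (hN x Hx); lra. }
  destruct (Nat.eq_dec (N x) (N y)) as [E|E].
  - unfold vf, Lf. rewrite E. specialize (hd1 (N y)).
    assert (0 < / (a (S (N y)) - a (N y))) by (apply Rinv_0_lt_compat; lra).
    assert (0 < (y - x) * / (a (S (N y)) - a (N y))) by (apply Rmult_lt_0_compat; lra).
    assert (forall z, (z - a (N y)) * / (a (S (N y)) - a (N y)) =
        z * / (a (S (N y)) - a (N y)) - a (N y) * / (a (S (N y)) - a (N y))) by (intros; ring).
    rewrite !H1. assert ((y - x) * / (a (S (N y)) - a (N y)) = y * / (a (S (N y)) - a (N y)) - x * / (a (S (N y)) - a (N y))) by ring.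
    lra.
  - assert (S (N x) <= N y)%nat by lia. apply le_INR in H. rewrite S_INR in H.
    pose proof (v_bounds a N hd1 hN x Hx). pose proof (v_bounds a N hd1 hN y ltac:(lra)). lra.
Qed.

Lemma v_lip a N (hd1 : forall k, 1 <= a (S k) - a k)
  (hdm : forall k, a (S k) - a k <= a (S (S k)) - a (S k))
  (hN : forall y, 0 <= y -> a (N y) <= y < a (S (N y))) x y :
  0 <= x -> x <= y -> 0 <= vf a N y - vf a N x <= y - x.
Proof.
  intros Hx Hxy. split.
  - destruct (Req_dec x y). subst; lra. pose proof (v_strict a N hd1 hN x y Hx ltac:(lra)); lra.
  - pose proof (v_le_L a N hd1 hdm hN y (N x) ltac:(lra)).
    unfold vf in *. unfold Lf in *.
    specialize (hd1 (N x)).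
    assert (0 < / (a (S (N x)) - a (N x)) <= 1).
    { split. apply Rinv_0_lt_compat; lra. rewrite <- Rinv_1. apply Rinv_le_contravar; lra. }
    assert ((y - a (N x)) * / (a (S (N x)) - a (N x)) - (x - a (N x)) * / (a (S (N x)) - a (N x))
       = (y - x) * / (a (S (N x)) - a (N x))) by ring.
    assert ((y - x) * / (a (S (N x)) - a (N x)) <= (y - x) * 1) by (apply Rmult_le_compat_l; lra).
    lra.
Qed.

Lemma v_props a N (ha0 : a 0%nat = 0) (hd1 : forall k, 1 <= a (S k) - a k)
  (hdm : forall k, a (S k) - a k <= a (S (S k)) - a (S k))
  (hN : forall y, 0 <= y -> a (N y) <= y < a (S (N y))) :
  maps_nonneg (vf a N) /\ continuous_on_nonneg (vf a N) /\ strict_incr_on_nonneg (vf a N) /\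
    concave_on_nonneg (vf a N) /\ tends_to_infty (vf a N).
Proof.
  split; [|split; [|split; [|split]]].
  - intros x Hx. pose proof (v_bounds a N hd1 hN x Hx). pose proof (pos_INR (N x)). lra.
  - intros x Hx eps Heps. exists eps. split. lra.
    intros z [[Hz _] Hd]. simpl in *. unfold R_dist in *. unfold nonneg_half in Hz.
    destruct (Rle_dec x z).
    + pose proof (v_lip a N hd1 hdm hN x z Hx r).
      rewrite Rabs_right in Hd by lra. rewrite Rabs_right by lra. lra.
    + pose proof (v_lip a N hd1 hdm hN z x Hz ltac:(lra)).
      rewrite Rabs_left1 in Hd by lra. rewrite Rabs_left1 by lra. lra.
  - intros x y Hx Hxy. apply v_strict; auto.
  - intros x y t Hx Hy Ht.
    set (z := t * x + (1 - t) * y).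
    assert (Hz : 0 <= z).
    { unfold z. assert (0 <= t * x) by (apply Rmult_le_pos; lra).
      assert (0 <= (1 - t) * y) by (apply Rmult_le_pos; lra). lra. }
    pose proof (v_le_L a N hd1 hdm hN x (N z) Hx).
    pose proof (v_le_L a N hd1 hdm hN y (N z) Hy).
    assert (t * vf a N x <= t * Lf a (N z) x) by (apply Rmult_le_compat_l; lra).
    assert ((1 - t) * vf a N y <= (1 - t) * Lf a (N z) y) by (apply Rmult_le_compat_l; lra).
    assert (t * Lf a (N z) x + (1 - t) * Lf a (N z) y = vf a N z).
    { unfold vf, Lf, z. ring. }
    lra.
  - intros M. destruct (nat_unb M) as [n Hn]. exists (a n). intros x Hx.
    pose proof (a_ge a ha0 hd1 n). pose proof (pos_INR n).
    assert (Hm := N_ge a N hd1 hN x n ltac:(lra) Hx). apply le_INR in Hm.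
    pose proof (v_bounds a N hd1 hN x ltac:(lra)). lra.
Qed.
From Stdlib Require Import ClassicalEpsilon.

Fixpoint pseq (H : R -> R) (n : nat) : R * R :=
  match n with
  | O => (0, 1)
  | S n => let q := pseq H n in
           (fst q + Rmax (snd q) (H (fst q) - fst q), Rmax (snd q) (H (fst q) - fst q))
  end.

Definition aseq H n := fst (pseq H n).
Lemma pseq_props H :
  let a := aseq H in
  a 0%nat = 0 /\ (forall k, 1 <= a (S k) - a k) /\
  (forall k, a (S k) - a k <= a (S (S k)) - a (S k)) /\
  (forall k, H (a k) <= a (S k)).
Proof.
  intros a.
  assert (Hd : forall n, 1 <= snd (pseq H n)).
  { induction n; simpl. lra. pose proof (Rmax_l (snd (pseq H n)) (H (fst (pseq H n)) - fst (pseq H n))). lra. }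
  assert (Hgap : forall n, a (S n) - a n = snd (pseq H (S n))).
  { intros n. unfold a, aseq. simpl. ring. }
  split; [reflexivity|split; [|split]].
  - intros k. rewrite Hgap. apply Hd.
  - intros k. rewrite !Hgap. simpl (snd (pseq H (S (S k)))). apply Rmax_l.
  - intros k. unfold a, aseq. simpl.
    pose proof (Rmax_r (snd (pseq H k)) (H (fst (pseq H k)) - fst (pseq H k))). lra.
Qed.

Lemma N_exists a (ha0 : a 0%nat = 0) (hd1 : forall k, 1 <= a (S k) - a k) y :
  exists n, 0 <= y -> a n <= y < a (S n).
Proof.
  destruct (Rle_dec 0 y) as [Hy|Hy]; [|exists 0%nat; intros; lra].
  destruct (nat_unb y) as [m Hm]. pose proof (a_ge a ha0 hd1 m).
  assert (y < a m) by lra. clear Hm H.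
  induction m. lra.
  destruct (Rlt_dec y (a m)). auto. exists m. intros; lra.
Qed.

Theorem lemma3p2 (f g : R -> R)
  (hf0 : maps_nonneg f) (hg0 : maps_nonneg g)
  (hfi : nondecr_on_nonneg f) (hgi : nondecr_on_nonneg g)
  (hfl : tends_to_infty f) (hgl : tends_to_infty g) :
  exists delta : R, 0 < delta /\
  exists v : R -> R,
    maps_nonneg v /\ continuous_on_nonneg v /\ strict_incr_on_nonneg v /\
    concave_on_nonneg v /\ tends_to_infty v /\
    exists X : R, forall x, X <= x -> delta <= v (f x) / v (g x).
Proof.
  set (Xf := fun y => proj1_sig (constructive_indefinite_description _ (hfl (y + 1)))).
  assert (HXf : forall y x, Xf y <= x -> y + 1 <= f x).
  { intros y. unfold Xf. destruct (constructive_indefinite_description _ (hfl (y + 1))); simpl; auto. }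
  set (H := fun y => g (Rmax (Xf y) 0)).
  assert (HH : forall y x, 0 <= x -> f x <= y -> g x <= H y).
  { intros y x Hx Hf. unfold H. apply hgi. auto.
    destruct (Rle_dec (Xf y) x). specialize (HXf y x r). lra.
    pose proof (Rmax_l (Xf y) 0). lra. }
  destruct (pseq_props H) as [ha0 [hd1 [hdm hHa]]].
  set (a := aseq H) in *.
  set (N := fun y => proj1_sig (constructive_indefinite_description _ (N_exists a ha0 hd1 y))).
  assert (hN : forall y, 0 <= y -> a (N y) <= y < a (S (N y))).
  { intros y. unfold N. destruct (constructive_indefinite_description _ (N_exists a ha0 hd1 y)); simpl; auto. }
  exists (/4). split. lra.
  exists (vf a N).
  destruct (v_props a N ha0 hd1 hdm hN) as [P1 [P2 [P3 [P4 P5]]]].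
  split; auto. split; auto. split; auto. split; auto. split; auto.
  destruct (hfl (a 1%nat)) as [X1 HX1].
  destruct (hgl (a 1%nat)) as [X2 HX2].
  exists (Rmax 0 (Rmax X1 X2)). intros x Hx.
  pose proof (Rmax_l 0 (Rmax X1 X2)). pose proof (Rmax_r 0 (Rmax X1 X2)).
  pose proof (Rmax_l X1 X2). pose proof (Rmax_r X1 X2).
  assert (Hx0 : 0 <= x) by lra.
  specialize (HX1 x ltac:(lra)). specialize (HX2 x ltac:(lra)).
  pose proof (hf0 x Hx0) as Hf0. pose proof (hg0 x Hx0) as Hg0.
  set (n := N (f x)).
  assert (Hn1 : (1 <= n)%nat) by (apply (N_ge a N hd1 hN); auto).
  destruct (hN (f x) Hf0) as [_ Hfx].
  assert (Hgx : g x <= a (S (S n))).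
  { eapply Rle_trans. apply (HH (a (S n))). auto. fold n in Hfx. lra. apply hHa. }
  assert (HNg : (N (g x) <= S (S n))%nat).
  { apply (N_le a N hd1 hN); auto. pose proof (hd1 (S (S n))). lra. }
  assert (HNg1 : (1 <= N (g x))%nat) by (apply (N_ge a N hd1 hN); auto).
  pose proof (v_bounds a N hd1 hN (f x) Hf0) as Bf.
  pose proof (v_bounds a N hd1 hN (g x) Hg0) as Bg.
  fold n in Bf.
  apply le_INR in Hn1, HNg, HNg1. rewrite !S_INR in HNg. simpl in Hn1, HNg1.
  assert (Hpos : 0 < vf a N (g x)) by lra.
  apply (Rmult_le_reg_r (vf a N (g x))). lra.
  replace (vf a N (f x) / vf a N (g x) * vf a N (g x)) with (vf a N (f x)) by (field; lra).
  lra.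
Qed.
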